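(* Let $R$ be a commutative ring with identity and let $M$ be a non-zero comultiplication $R$-module. A submodule $N$ of $M$ is a large submodule of $M$ if and only if $\mathrm{Soc}(M)\subseteq N$.
   Context: An $R$-module $M$ is a comultiplication module if for every submodule $N$ of $M$ there is an ideal $I$ of $R$ with $N=\mathrm{Ann}_M(I)=\{m\in M: Im=0\}$. A submodule $N$ of $M$ is large (essential) in $M$ if $N\cap L\neq 0$ for every non-zero submodule $L$ of $M$. $\mathrm{Min}(M)$ denotes the set of minimal (i.e. simple) submodules of $M$, and $\mathrm{Soc}(M)$ denotes the sum of all minimal submodules of $M$. *)

(* Defs.v *)
From HB Require Import structures.
From mathcomp Require Import all_boot all_order all_algebra.
Set Implicit Arguments. Unset Strict Implicit. Unset Printing Implicit Defensive.
Import GRing.Theory.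
Local Open Scope ring_scope.

Section ModDefs.
Variables (R : comPzRingType) (M : lmodType R).

Definition submodule (N : M -> Prop) : Prop :=
  N 0 /\ (forall x y, N x -> N y -> N (x + y)) /\ (forall (a : R) x, N x -> N (a *: x)).

Definition ideal (I : R -> Prop) : Prop :=
  I 0 /\ (forall a b, I a -> I b -> I (a + b)) /\ (forall r a, I a -> I (r * a)).

Definition AnnM (I : R -> Prop) : M -> Prop :=
  fun m => forall r, I r -> r *: m = 0.

Definition comultiplication_module : Prop :=
  forall N : M -> Prop, submodule N ->
    exists I : R -> Prop, ideal I /\ (forall m, N m <-> AnnM I m).

Definition large (N : M -> Prop) : Prop :=
  submodule N /\
  forall L : M -> Prop, submodule L -> (exists x, L x /\ x <> 0) ->
    exists x, N x /\ L x /\ x <> 0.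

Definition minimal_submodule (L : M -> Prop) : Prop :=
  submodule L /\ (exists x, L x /\ x <> 0) /\
  forall K : M -> Prop, submodule K -> (forall x, K x -> L x) ->
    (forall x, K x -> x = 0) \/ (forall x, L x -> K x).

(* Soc(M): the sum of all minimal submodules, i.e. the smallest submodule
   containing every minimal submodule (equal to 0 if there is none). *)
Definition Soc : M -> Prop :=
  fun m => forall K : M -> Prop, submodule K ->
    (forall L, minimal_submodule L -> forall x, L x -> K x) -> K m.

End ModDefs.

(* Main.v *)
Require Import Defs.
From HB Require Import structures.
From mathcomp Require Import all_boot all_order all_algebra.
From mathcomp Require Import boolp classical_sets.
Import GRing.Theory.
Local Open Scope classical_set_scope.
Local Open Scope ring_scope.

Lemma maxideal (R : comPzRingType) (A : R -> Prop) : ideal A -> ~ A 1 ->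
  exists m : R -> Prop, ideal m /\ ~ m 1 /\ (forall a, A a -> m a) /\
   (forall s, ~ m s -> exists t, m (1 - t * s)).
Proof.
move=> [A0 [AD AM]] A1.
pose P := fun X : set R => ideal (X `|` A) /\ ~ (X `|` A) 1.
have [X [[[X0 [XD XM]] X1] Xmax]] : exists X, P X /\ forall B, (X `<` B)%classic -> ~ P B.
  apply: Zorn_bigcup => F FP Ftot; split; last first.
    case=> [[Y FY Y1]|]; last exact: A1.
    by case: (FP _ FY) => _; apply; left.
  split; first by right.
  split.
    move=> a b [[Ya FYa Yaa]|Aa] [[Yb FYb Ybb]|Ab].
    - case: (Ftot _ _ FYa FYb) => [sub|sub].
      + have [_ [D _]] := (FP _ FYb).1.
        case: (D a b (or_introl (sub _ Yaa)) (or_introl Ybb)) => [h|h]; first by left; exists Yb.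
        by right.
      + have [_ [D _]] := (FP _ FYa).1.
        case: (D a b (or_introl Yaa) (or_introl (sub _ Ybb))) => [h|h]; first by left; exists Ya.
        by right.
    - have [_ [D _]] := (FP _ FYa).1.
      case: (D a b (or_introl Yaa) (or_intror Ab)) => [h|h]; first by left; exists Ya.
      by right.
    - have [_ [D _]] := (FP _ FYb).1.
      case: (D a b (or_intror Aa) (or_introl Ybb)) => [h|h]; first by left; exists Yb.
      by right.
    - by right; apply: AD.
  move=> r a [[Ya FYa Yaa]|Aa].
    have [_ [_ Mu]] := (FP _ FYa).1.
    case: (Mu r a (or_introl Yaa)) => [h|h]; first by left; exists Ya.
    by right.
  by right; apply: AM.
exists (X `|` A); split; first by split.
split; first exact: X1.
split; first by move=> a Aa; right.
move=> s ns.
apply: contrapT => hne.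
pose J : set R := fun z => exists a t, (X `|` A) a /\ z = a + t * s.
have JP : P J.
  have Jid : ideal (J `|` A).
    split; first by right.
    split.
      move=> a b [[a1 [t1 [h1 ->]]]|Aa] [[b1 [t2 [h2 ->]]]|Ab].
      - left; exists (a1 + b1), (t1 + t2); split; first exact: XD.
        by rewrite mulrDl; rewrite addrACA.
      - left; exists (a1 + b), t1; split; first by apply: XD => //; right.
        by rewrite addrAC.
      - left; exists (a + b1), t2; split; first by apply: XD => //; right.
        by rewrite addrA.
      - by right; apply: AD.
    move=> r a [[a1 [t1 [h1 ->]]]|Aa].
      left; exists (r * a1), (r * t1); split; first exact: XM.
      by rewrite mulrDr mulrA.
    by right; apply: AM.
  split => //.
  case=> [[a [t [h E]]]|]; last exact: A1.
  apply: hne; exists t.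
  suff -> : 1 - t * s = a by [].
  by rewrite E addrK.
apply: (Xmax J) JP; split.
  move=> z Xz; exists z, 0; split; first by left.
  by rewrite mul0r addr0.
move=> JX; apply: ns.
have : J s by exists 0, 1; split; [exact: X0 | rewrite add0r mul1r].
by move/JX; left.
Qed.

Theorem lemma2p2 (R : comPzRingType) (M : lmodType R)
  (HM : exists m : M, m <> 0) (Hco : comultiplication_module M)
  (N : M -> Prop) (HN : submodule N) :
  large N <-> (forall m, Soc m -> N m).
Proof.
have [N0 [ND NZ]] := HN.
split.
  move=> [_ HL] m Sm; apply: Sm => // L [[L0 [LD LZ]] [[x0 [Lx0 nz]] Lmin]] x Lx.
  have [z [Nz [Lz znz]]] := HL L (conj L0 (conj LD LZ)) (ex_intro _ x0 (conj Lx0 nz)).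
  have Ksub : submodule (fun w => N w /\ L w).
    split; first by split.
    split; first by move=> a b [? ?] [? ?]; split; [apply: ND|apply: LD].
    by move=> a w [? ?]; split; [apply: NZ|apply: LZ].
  case: (Lmin _ Ksub (fun w h => h.2)) => [H|H].
    by exfalso; apply: znz; apply: H.
  by case: (H x Lx).
move=> hS; split => // L [L0 [LD LZ]] [x [Lx xnz]].
pose A := fun a : R => a *: x = 0.
have Aid : ideal A.
  split; first exact: scale0r.
  split; first by move=> a b; rewrite /A scalerDl => -> ->; rewrite addr0.
  by move=> r a; rewrite /A -scalerA => ->; rewrite scaler0.
have A1 : ~ A 1 by rewrite /A scale1r.
have [m [[m0 [mD mM]] [m1 [Am mmax]]]] := @maxideal R A Aid A1.
pose Mx := fun z => exists a, m a /\ z = a *: x.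
have Mxsub : submodule Mx.
  split; first by exists 0; split => //; rewrite scale0r.
  split.
    by move=> a b [a1 [h1 ->]] [b1 [h2 ->]]; exists (a1 + b1); split; [apply: mD|rewrite scalerDl].
  by move=> r z [a1 [h1 ->]]; exists (r * a1); split; [apply: mM|rewrite scalerA].
have [I [_ HI]] := Hco _ Mxsub.
have xnM : ~ Mx x.
  move=> [a [ma E]]; apply: m1.
  have : A (1 - a) by rewrite /A scalerBl scale1r -E subrr.
  move/Am => h; have := mD _ _ h ma; by rewrite subrK.
have [r [Ir rx]] : exists r, I r /\ r *: x <> 0.
  apply: contrapT => H; apply: xnM; apply/HI => r Ir.
  apply: contrapT => ne; apply: H; exists r; split => //.
pose y := r *: x.
have my : forall a, m a -> a *: y = 0.
  move=> a ma; have : AnnM I (a *: x) by apply/HI; exists a.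
  move/(_ r Ir); by rewrite /y scalerA mulrC -scalerA.
pose Ry := fun z => exists s, z = s *: y.
have Rysub : submodule Ry.
  split; first by exists 0; rewrite scale0r.
  split; first by move=> a b [s1 ->] [s2 ->]; exists (s1 + s2); rewrite scalerDl.
  by move=> a z [s ->]; exists (a * s); rewrite scalerA.
have Rymin : minimal_submodule Ry.
  split => //; split; first by exists y; split => //; exists 1; rewrite scale1r.
  move=> K [K0 [KD KZ]] KR.
  case: (pselect (exists k, K k /\ k <> 0)) => [[k [Kk knz]]|H]; last first.
    left=> z Kz; apply: contrapT => nz; apply: H; exists z; split => //.
  right; have [s ks] := KR k Kk.
  have ns : ~ m s by move=> ms; apply: knz; rewrite ks; apply: my.
  have [t mt] := mmax s ns.
  have Ky : K y.
    have E : (1 - t * s) *: y = 0 := my _ mt.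
    rewrite scalerBl scale1r in E; move/eqP: E; rewrite subr_eq0 => /eqP E.
    by rewrite E -scalerA -ks; apply: KZ.
  by move=> z [s' ->]; apply: KZ.
have Sy : Soc y by move=> K _ HK; apply: (HK Ry Rymin); exists 1; rewrite scale1r.
exists y; split; first exact: hS.
split; first by apply: LZ.
exact: rx.
Qed.
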